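(* Let $Q$ access points be at fixed positions $\mathbf{o}_1,\dots,\mathbf{o}_Q\in\mathbb{R}^2$ and let a user move on $\mathbf{x}_t=\mathbf{x}+t\mathbf{v}$, $t=1,2,\dots$, with $\mathbf{v}\neq\mathbf{0}$, not passing through any AP. Put $\bm{l}_q=\mathbf{x}-\mathbf{o}_q$, $\mathbf{d}_{t,q}=\bm{l}_q+t\mathbf{v}$, $d_{t,q}=\|\mathbf{d}_{t,q}\|$, $d_{\min}=\min_{t,q}d_{t,q}>0$. Let $C_0=G_1N_{\mathrm t}(N_{\mathrm t}^2-1)/(\sigma_{\mathrm n}^2d_{\min}^2)$, $$\mathbf{A}_{T,x}=\sum_{q=1}^{Q}\sum_{t=1}^{T}\frac{d_{t,q}^2\mathbf{I}-\mathbf{d}_{t,q}\mathbf{d}_{t,q}^{\mathrm T}}{d_{t,q}^4},\qquad \bar\Delta_{T,x}=\mathrm{tr}\{(C_0\mathbf{A}_{T,x})^{-1}\}.$$ Then the CRLB of $\mathbf{x}$ satisfies $B(\mathbf{x})=\mathrm{tr}\{\mathbf{F}_{T,x}^{-1}\}\ge\bar\Delta_{T,x}$, with equality achieved when $d_{t,q}=d_{\min}$ and $\phi_{t,q}=0$ for all $t,q$. In addition, $\bar\Delta_{T,x}$ is strictly decreasing in $T$, provided that at least two vectors in $\{\bm{l}_1,\dots,\bm{l}_Q,\mathbf{v}\}$ are linearly independent, but $\bar\Delta_{T,x}$ converges to a strictly positive number as $T\to\infty$.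
   Context: Each AP carries an $N_{\mathrm t}$-element uniform linear array; $G_1>0$ is an antenna-configuration constant and $\sigma_{\mathrm n}^2>0$ is the noise variance. The AoD measurement from AP $q$ at time $t$ is Gaussian with mean the geometric azimuth angle from $\mathbf{o}_q$ to $\mathbf{x}_t$ and variance $\sigma_{\theta,t,q}^2=d_{t,q}^2\sigma_{\mathrm n}^2/(G_1N_{\mathrm t}(N_{\mathrm t}^2-1)\cos^2\phi_{t,q})$, where $\phi_{t,q}$ is the angle of the user relative to the array reference direction of AP $q$ (the single-snapshot ULA angle CRLB). Measurements are independent. $\mathbf{F}_{T,x}$ is the Fisher information of the initial position $\mathbf{x}$ (diagonal block of the FIM of $(\mathbf{x},\mathbf{v})$), namely $\mathbf{F}_{T,x}=\sum_{t=1}^T\sum_{q=1}^Q\frac{1}{\sigma_{\theta,t,q}^2d_{t,q}^4}(d_{t,q}^2\mathbf{I}-\mathbf{d}_{t,q}\mathbf{d}_{t,q}^{\mathrm T})$. *)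

(* Defs.v *)
From HB Require Import structures.
From mathcomp Require Import all_boot all_order all_algebra.
From mathcomp Require Import all_classical all_reals all_analysis.
Set Implicit Arguments. Unset Strict Implicit. Unset Printing Implicit Defensive.
Import Order.TTheory GRing.Theory Num.Theory.
Local Open Scope ring_scope.

Definition vnorm (R : realType) (u : 'cV[R]_2) : R :=
  Num.sqrt (\sum_(i < 2) u i 0 ^+ 2).

Definition lvec (R : realType) (Q : nat) (x : 'cV[R]_2) (o : 'I_Q -> 'cV[R]_2)
  (q : 'I_Q) : 'cV[R]_2 := x - o q.

Definition dvec (R : realType) (Q : nat) (x v : 'cV[R]_2) (o : 'I_Q -> 'cV[R]_2)
  (t : nat) (q : 'I_Q) : 'cV[R]_2 := lvec x o q + t%:R *: v.

Definition proj_term (R : realType) (u : 'cV[R]_2) : 'M[R]_2 :=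
  (vnorm u ^+ 4)^-1 *: ((vnorm u ^+ 2)%:M - u *m u^T).

Definition A_T (R : realType) (Q : nat) (x v : 'cV[R]_2) (o : 'I_Q -> 'cV[R]_2)
  (T : nat) : 'M[R]_2 :=
  \sum_(q < Q) \sum_(1 <= t < T.+1) proj_term (dvec x v o t q).

Definition C0 (R : realType) (G1 : R) (Nt : nat) (sigma2 dmin : R) : R :=
  G1 * Nt%:R * (Nt%:R ^+ 2 - 1) / (sigma2 * dmin ^+ 2).

(* AoD variance sigma_{theta,t,q}^2 = d^2 sigma_n^2 / (G1 Nt (Nt^2-1) cos^2 phi) *)
Definition sigma_theta2 (R : realType) (Q : nat) (G1 : R) (Nt : nat) (sigma2 : R)
  (x v : 'cV[R]_2) (o : 'I_Q -> 'cV[R]_2) (phi : nat -> 'I_Q -> R)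
  (t : nat) (q : 'I_Q) : R :=
  vnorm (dvec x v o t q) ^+ 2 * sigma2 /
    (G1 * Nt%:R * (Nt%:R ^+ 2 - 1) * cos (phi t q) ^+ 2).

Definition FisherX (R : realType) (Q : nat) (G1 : R) (Nt : nat) (sigma2 : R)
  (x v : 'cV[R]_2) (o : 'I_Q -> 'cV[R]_2) (phi : nat -> 'I_Q -> R)
  (T : nat) : 'M[R]_2 :=
  \sum_(1 <= t < T.+1) \sum_(q < Q)
    ((sigma_theta2 G1 Nt sigma2 x v o phi t q * vnorm (dvec x v o t q) ^+ 4)^-1 *:
      ((vnorm (dvec x v o t q) ^+ 2)%:M - dvec x v o t q *m (dvec x v o t q)^T)).

(* tr{M^{-1}} as an extended real: +oo when M is singular. *)
Definition trinv (R : realType) (M : 'M[R]_2) : \bar R :=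
  if M \in unitmx then ((\tr (invmx M))%:E)%E else (+oo)%E.

Definition CRLB (R : realType) (Q : nat) (G1 : R) (Nt : nat) (sigma2 : R)
  (x v : 'cV[R]_2) (o : 'I_Q -> 'cV[R]_2) (phi : nat -> 'I_Q -> R) (T : nat) : \bar R :=
  trinv (FisherX G1 Nt sigma2 x v o phi T).

Definition Delta_bar (R : realType) (Q : nat) (G1 : R) (Nt : nat) (sigma2 dmin : R)
  (x v : 'cV[R]_2) (o : 'I_Q -> 'cV[R]_2) (T : nat) : \bar R :=
  trinv (C0 G1 Nt sigma2 dmin *: A_T x v o T).

Definition lv_family (R : realType) (Q : nat) (x v : 'cV[R]_2) (o : 'I_Q -> 'cV[R]_2)
  (i : option 'I_Q) : 'cV[R]_2 :=
  match i with Some q => lvec x o q | None => v end.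

(* Main.v *)
Require Import Defs.
From HB Require Import structures.
From mathcomp Require Import all_boot all_order all_algebra.
From mathcomp Require Import all_classical all_reals all_analysis.
From mathcomp Require Import ring lra.
Set Implicit Arguments.
Import Order.TTheory GRing.Theory Num.Theory.
Local Open Scope classical_set_scope.
Local Open Scope ring_scope.

Lemma det22 (R : comRingType) (M : 'M[R]_2) : \det M = M 0 0 * M 1 1 - M 0 1 * M 1 0.
Proof.
rewrite (expand_det_row _ 0) !big_ord_recl big_ord0 /cofactor !det_mx11 !mxE /=.
rewrite !expr0 !expr1 addr0.
have -> : lift 0 (0 : 'I_1) = 1 by apply/val_inj.
have -> : lift 1 (0 : 'I_1) = 0 by apply/val_inj.
 ring.
Qed.

Lemma unit22 (R : fieldType) (M : 'M[R]_2) :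
  (M \in unitmx) = (M 0 0 * M 1 1 - M 0 1 * M 1 0 != 0).
Proof. by rewrite unitmxE unitfE det22. Qed.

Lemma tr22 (R : ringType) (M : 'M[R]_2) : \tr M = M 0 0 + M 1 1.
Proof.
rewrite /mxtrace !big_ord_recl big_ord0 addr0.
by have -> : lift ord0 (ord0 : 'I_1) = 1 :> 'I_2 by apply/val_inj.
Qed.

Lemma trinv22 (R : fieldType) (M : 'M[R]_2) : M \in unitmx ->
  \tr (invmx M) = (M 0 0 + M 1 1) / (M 0 0 * M 1 1 - M 0 1 * M 1 0).
Proof.
move=> HM; have := HM; rewrite unit22 => hd.
have E := mulmxV HM.
have e i j : (M *m invmx M) i j = (1%:M : 'M[R]_2) i j by rewrite E.
have e00 := e 0 0; have e01 := e 0 1; have e10 := e 1 0; have e11 := e 1 1.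
move: e00 e01 e10 e11; rewrite !mxE !big_ord_recl !big_ord0 /=.
set N := invmx M.
have -> : lift 0 (0 : 'I_1) = 1 by apply/val_inj.
have hz : (ord0 : 'I_2) = 0 by [].
rewrite !hz.
move=> e00 e01 e10 e11.
rewrite tr22.
apply: (mulIf hd); rewrite mulfVK //.
have h1 : (M 0 0 * M 1 1 - M 0 1 * M 1 0) * N 0 0 = M 1 1.
  move: e00 e10 => /= e00 e10.
  transitivity (M 1 1 * (M 0 0 * N 0 0 + (M 0 1 * N 1 0 + 0)) - M 0 1 * (M 1 0 * N 0 0 + (M 1 1 * N 1 0 + 0))); first ring.
  by rewrite e00 e10 /=; ring.
have h2 : (M 0 0 * M 1 1 - M 0 1 * M 1 0) * N 1 1 = M 0 0.
  move: e01 e11 => /= e01 e11.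
  transitivity (M 0 0 * (M 1 0 * N 0 1 + (M 1 1 * N 1 1 + 0)) - M 1 0 * (M 0 0 * N 0 1 + (M 0 1 * N 1 1 + 0))); first ring.
  by rewrite e01 e11 /=; ring.
rewrite mulrDl [_ * (_ - _)]mulrC h1 [N 1 1 * _]mulrC h2; ring.
Qed.

Section R.
Context {R : realFieldType}.

Lemma sq_le (S W : R) : 0 <= S -> W ^+ 2 <= S ^+ 2 -> W <= S.
Proof. move=> h1 h2; nra. Qed.

Lemma sq_lt (S W : R) : 0 <= S -> W ^+ 2 < S ^+ 2 -> W < S.
Proof. move=> h1 h2; nra. Qed.

Lemma cross (x y u w m n : R) : 0 <= x -> 0 <= y -> 0 <= u -> 0 <= w ->
  m ^+ 2 <= x * y -> n ^+ 2 <= u * w -> 2 * m * n <= x * w + y * u.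
Proof.
move=> hx hy hu hw hm hn.
apply: sq_le; first nra.
have h1 : m ^+ 2 * n ^+ 2 <= (x * y) * (u * w).
  apply: ler_pM => //; nra.
have h2 : 0 <= (x * w - y * u) ^+ 2 by apply: sqr_ge0.
nra.
Qed.


Lemma cross_strict (x y u w m n : R) : 0 <= x -> 0 <= y -> 0 < u -> 0 < w ->
  m ^+ 2 <= x * y -> n ^+ 2 < u * w -> 0 < x + y -> 2 * m * n < x * w + y * u.
Proof.
move=> hx hy hu hw hm hn hxy.
have [->|mn0] := eqVneq m 0.
  rewrite mulr0 mul0r; nra.
have hm2 : 0 < m ^+ 2 by rewrite exprn_even_gt0.
have hxy2 : 0 < x * y by apply: lt_le_trans hm.
apply: sq_lt; first nra.
have h1 : m ^+ 2 * n ^+ 2 <= (x * y) * n ^+ 2 by apply: ler_wpM2r => //; apply: sqr_ge0.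
have h1' : (x * y) * n ^+ 2 < (x * y) * (u * w) by rewrite ltr_pM2l.
have h2 : 0 <= (x * w - y * u) ^+ 2 by apply: sqr_ge0.
nra.
Qed.

Arguments cross {x y u w m n}.
Arguments cross_strict {x y u w m n}.

Definition psd2 (M : 'M[R]_2) : Prop :=
  [/\ M 1 0 = M 0 1, 0 <= M 0 0, 0 <= M 1 1 & M 0 1 ^+ 2 <= M 0 0 * M 1 1].
Definition dt (M : 'M[R]_2) : R := M 0 0 * M 1 1 - M 0 1 ^+ 2.
Definition trr (M : 'M[R]_2) : R := M 0 0 + M 1 1.

Lemma psd2_add F G : psd2 F -> psd2 G -> psd2 (F + G) /\ dt F + dt G <= dt (F + G).
Proof.
rewrite /psd2 /dt !mxE => -[s1 a0 c0 h1] [s2 p0 r0 h2].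
have hc := cross a0 c0 p0 r0 h1 h2.
split; last nra.
split; [by rewrite s1 s2|nra|nra|nra].
Qed.

Lemma psd2_0 : psd2 0.
Proof. by rewrite /psd2 !mxE expr2 !mulr0. Qed.

Lemma psd2_scale c M : 0 <= c -> psd2 M -> psd2 (c *: M).
Proof.
rewrite /psd2 !mxE => hc [s1 a0 c0 h1].
split; [by rewrite s1|exact: mulr_ge0|exact: mulr_ge0|].
have := ler_wpM2l (sqr_ge0 c) h1.
rewrite exprMn; nra.
Qed.

Lemma psd2_sum (I : Type) (r : seq I) (P : pred I) (f : I -> 'M[R]_2) :
  (forall i, P i -> psd2 (f i)) -> psd2 (\sum_(i <- r | P i) f i).
Proof.
move=> h; apply: (big_ind psd2) => //; first exact: psd2_0.
by move=> x y hx hy; case: (psd2_add hx hy).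
Qed.

Lemma psd2_dt M : psd2 M -> 0 <= dt M.
Proof. by case=> _ _ _ h; rewrite /dt subr_ge0. Qed.

Lemma mono22 F G : psd2 F -> psd2 G -> 0 < dt F ->
  [/\ 0 < dt (F + G), trr (F + G) / dt (F + G) <= trr F / dt F &
      (0 < trr G -> trr (F + G) / dt (F + G) < trr F / dt F)].
Proof.
move=> hF hG hD.
have [_ hD'] := psd2_add hF hG.
have hDG := psd2_dt hG.
have hpos : 0 < dt (F + G) by apply: lt_le_trans hD'; rewrite ltr_wpDr.
move: hF hG hD hD' hpos hDG; rewrite /psd2 /dt /trr !mxE.
set a := F 0 0; set b := F 0 1; set c := F 1 1.
set p := G 0 0; set q := G 0 1; set r := G 1 1.
move=> [s1 a0 c0 h1] [s2 p0 r0 h2] hD hD' hpos hDG.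
have ha : 0 < a by nra.
have hc : 0 < c by nra.
have hX : 0 < a ^+ 2 + b ^+ 2 by nra.
have hY : 0 < c ^+ 2 + b ^+ 2 by nra.
have hZ : ((a + c) * b) ^+ 2 < (c ^+ 2 + b ^+ 2) * (a ^+ 2 + b ^+ 2).
  have -> : (c ^+ 2 + b ^+ 2) * (a ^+ 2 + b ^+ 2) = ((a + c) * b) ^+ 2 + (a * c - b ^+ 2) ^+ 2 by ring.
  by rewrite ltrDl exprn_even_gt0 //= lt0r_neq0.
have key : (a + c) * ((a + p) * (c + r) - (b + q) ^+ 2) - (a + p + (c + r)) * (a * c - b ^+ 2)
   = (r * (a ^+ 2 + b ^+ 2) + p * (c ^+ 2 + b ^+ 2) - 2 * q * ((a + c) * b)) + (a + c) * (p * r - q ^+ 2) by ring.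
have h2r : q ^+ 2 <= r * p by rewrite mulrC.
have hw := cross r0 p0 (ltW hY) (ltW hX) h2r (ltW hZ).
split => //.
  rewrite ler_pdivrMr // mulrAC ler_pdivlMr //.
  rewrite -subr_ge0 key; apply: addr_ge0; first by rewrite subr_ge0.
  by apply: mulr_ge0; [nra|rewrite subr_ge0].
move=> hpr.
have hrp : 0 < r + p by rewrite addrC.
have hs := cross_strict r0 p0 hY hX h2r hZ hrp.
rewrite ltr_pdivrMr // mulrAC ltr_pdivlMr //.
rewrite -subr_gt0 key; apply: ltr_pwDl; first by rewrite subr_gt0.
by apply: mulr_ge0; [nra|rewrite subr_ge0].
Qed.
End R.

Section S.
Context {R : realType}.

Lemma vnorm2 (u : 'cV[R]_2) : vnorm u ^+ 2 = u 0 0 ^+ 2 + u 1 0 ^+ 2.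
Proof.
rewrite /vnorm sqr_sqrtr; last by apply: sumr_ge0 => i _; apply: sqr_ge0.
rewrite !big_ord_recl big_ord0 addr0 /=.
by have -> : lift ord0 (ord0 : 'I_1) = 1 :> 'I_2 by apply/val_inj.
Qed.

Definition Xm (u : 'cV[R]_2) : 'M[R]_2 := (vnorm u ^+ 2)%:M - u *m u^T.

Lemma Xm00 u : Xm u 0 0 = u 1 0 ^+ 2.
Proof. rewrite /Xm !mxE big_ord1 !mxE /= vnorm2 mulr1n; ring. Qed.
Lemma Xm11 u : Xm u 1 1 = u 0 0 ^+ 2.
Proof. rewrite /Xm !mxE big_ord1 !mxE /= vnorm2 mulr1n; ring. Qed.
Lemma Xm01 u : Xm u 0 1 = - (u 0 0 * u 1 0).
Proof. rewrite /Xm !mxE big_ord1 !mxE /= mulr0n; ring. Qed.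
Lemma Xm10 u : Xm u 1 0 = - (u 0 0 * u 1 0).
Proof. rewrite /Xm !mxE big_ord1 !mxE /= mulr0n; ring. Qed.

Lemma colmxE (u w : 'cV[R]_2) (i j : 'I_2) :
  (col_mx (u^T) (w^T) : 'M[R]_2) i j = if i == 0 then u j 0 else w j 0.
Proof.
rewrite mxE; case: splitP => k hk; rewrite mxE (ord1 k).
  by have -> : i = 0 by apply/val_inj; rewrite /= hk (ord1 k).
by have -> : (i == 0) = false by apply/negbTE; rewrite -val_eqE /= hk.
Qed.

Lemma rowfree_cross (u w : 'cV[R]_2) : row_free (col_mx (u^T) (w^T)) -> u 0 0 * w 1 0 - u 1 0 * w 0 0 != 0.
Proof. by rewrite (@row_free_unit _ 2) unit22 !colmxE. Qed.
End S.


Section T.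
Context {R : realType}.

Lemma mxDE (M N : 'M[R]_2) i j : (M + N) i j = M i j + N i j.
Proof. by rewrite mxE. Qed.
Lemma mxZE (c : R) (M : 'M[R]_2) i j : (c *: M) i j = c * M i j.
Proof. by rewrite mxE. Qed.

Lemma nz_norm (u : 'cV[R]_2) : u != 0 -> 0 < u 0 0 ^+ 2 + u 1 0 ^+ 2.
Proof.
move=> hu; rewrite lt_neqAle addr_ge0 ?sqr_ge0 // andbT.
apply: contra hu => /eqP h.
have h0 : u 0 0 = 0 by apply/eqP; rewrite -sqrf_eq0; apply/eqP; nra.
have h1 : u 1 0 = 0 by apply/eqP; rewrite -sqrf_eq0; apply/eqP; nra.
apply/eqP/matrixP => i j; rewrite (ord1 j) mxE.
case: i => [[|[|k]] hi] //.
- by rewrite -h0; congr (u _ _); apply/val_inj.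
- by rewrite -h1; congr (u _ _); apply/val_inj.
Qed.

Lemma psd_Xm (u : 'cV[R]_2) : psd2 (Xm u).
Proof.
rewrite /psd2 Xm00 Xm01 Xm10 Xm11; split => //; try exact: sqr_ge0.
by rewrite sqrrN exprMn mulrC.
Qed.

Lemma proj_termE (u : 'cV[R]_2) : proj_term u = ((u 0 0 ^+ 2 + u 1 0 ^+ 2) ^+ 2)^-1 *: Xm u.
Proof. by rewrite /proj_term -vnorm2 -exprM. Qed.

Lemma psd_proj (u : 'cV[R]_2) : psd2 (proj_term u).
Proof.
rewrite proj_termE; apply: psd2_scale; last exact: psd_Xm.
by rewrite invr_ge0 sqr_ge0.
Qed.

Lemma trr_scale (c : R) M : trr (c *: M) = c * trr M.
Proof. by rewrite /trr !mxE mulrDr. Qed.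
Lemma trr_add (M N : 'M[R]_2) : trr (M + N) = trr M + trr N.
Proof. rewrite /trr !mxE; ring. Qed.
Lemma trr_sum (I : Type) (r : seq I) (P : pred I) (f : I -> 'M[R]_2) :
  trr (\sum_(i <- r | P i) f i) = \sum_(i <- r | P i) trr (f i).
Proof. by rewrite /trr !summxE -big_split. Qed.
Lemma dt_scale (c : R) M : dt (c *: M) = c ^+ 2 * dt M.
Proof. rewrite /dt !mxE; ring. Qed.

Lemma trr_proj (u : 'cV[R]_2) : u != 0 ->
  trr (proj_term u) = (u 0 0 ^+ 2 + u 1 0 ^+ 2)^-1.
Proof.
move=> hu; have hn := nz_norm _ hu.
rewrite proj_termE trr_scale /trr Xm00 Xm11.
by field; rewrite lt0r_neq0.
Qed.

Lemma psd2_sum_nat (m n : nat) (f : nat -> 'M[R]_2) :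
  (forall t, (m <= t < n)%N -> psd2 (f t)) -> psd2 (\sum_(m <= t < n) f t).
Proof.
move=> h; rewrite big_nat_cond; apply: psd2_sum => t /andP[ht _]; exact: h.
Qed.

Lemma trinv_psd (M : 'M[R]_2) : psd2 M ->
  trinv M = if 0 < dt M then (trr M / dt M)%:E else (+oo)%E.
Proof.
move=> hM; have hd := psd2_dt hM; case: hM => s _ _ _.
rewrite /trinv unit22 s -expr2 -/(dt M) lt_neqAle hd andbT eq_sym.
case: (eqVneq 0 (dt M)) => [h|h] //=.
by rewrite trinv22 ?unit22 s -expr2 // -/(dt M) eq_sym.
Qed.

Lemma dt_pair (a b : R) (d e : 'cV[R]_2) :
  dt (a *: Xm d + b *: Xm e) = a * b * (d 1 0 * e 0 0 - d 0 0 * e 1 0) ^+ 2.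
Proof. rewrite /dt !mxDE !mxZE !Xm00 !Xm01 !Xm11; ring. Qed.

Lemma trdt_lb (M : 'M[R]_2) : psd2 M -> 0 < dt M -> 4 / trr M <= trr M / dt M.
Proof.
case=> s a0 c0 h; rewrite /dt /trr => hd.
have ht : 0 < M 0 0 + M 1 1 by nra.
rewrite ler_pdivrMr // mulrAC ler_pdivlMr //.
have := sqr_ge0 (M 0 0 - M 1 1); nra.
Qed.

End T.


Section Main.
Context {R : realType} {Q : nat} (x v : 'cV[R]_2) (o : 'I_Q -> 'cV[R]_2).

Lemma A_S T : A_T x v o T.+1 = A_T x v o T + \sum_(q < Q) proj_term (dvec x v o T.+1 q).
Proof. rewrite /A_T -big_split /=; apply: eq_bigr => q _; by rewrite big_nat_recr. Qed.

Lemma A_psd T : psd2 (A_T x v o T).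
Proof. apply: psd2_sum => q _; apply: psd2_sum => t _; exact: psd_proj. Qed.

Lemma G_psd T : psd2 (\sum_(q < Q) proj_term (dvec x v o T q)).
Proof. apply: psd2_sum => q _; exact: psd_proj. Qed.

Lemma A_dt_mono T k : dt (A_T x v o T) <= dt (A_T x v o (T + k)).
Proof.
elim: k => [|k IH]; first by rewrite addn0.
rewrite addnS A_S; apply: le_trans IH _.
have [_ h] := psd2_add (A_psd (T + k)) (G_psd (T + k).+1).
have := psd2_dt (G_psd (T + k).+1); lra.
Qed.

Lemma dvecE t q i : dvec x v o t q i 0 = x i 0 - o q i 0 + t%:R * v i 0.
Proof. by rewrite /dvec /lvec !mxE. Qed.

Lemma lvecE q i : lvec x o q i 0 = x i 0 - o q i 0.
Proof. by rewrite /lvec !mxE. Qed.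

Definition crs (u w : 'cV[R]_2) := u 0 0 * w 1 0 - u 1 0 * w 0 0.

Lemma A2_pos q0 : crs (lvec x o q0) v != 0 ->
  (forall t q, (0 < t)%N -> dvec x v o t q != 0) -> 0 < dt (A_T x v o 2).
Proof.
move=> hc hnz.
rewrite /A_T (bigD1 q0) //=.
set f := \sum_(1 <= t < 3) _.
set g := \sum_(i < Q | i != q0) _.
have hg : psd2 g by apply: psd2_sum => q _; apply: psd2_sum => t _; exact: psd_proj.
have hf : psd2 f by apply: psd2_sum => t _; exact: psd_proj.
have [_ h] := psd2_add hf hg.
have := psd2_dt hg.
suff : 0 < dt f by lra.
rewrite /f big_ltn // big_ltn // big_geq // addr0 !proj_termE dt_pair.
have n1 := nz_norm _ (hnz 1%N q0 isT).
have n2 := nz_norm _ (hnz 2%N q0 isT).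
apply: mulr_gt0; first by apply: mulr_gt0; rewrite invr_gt0 exprn_gt0.
rewrite exprn_even_gt0 //.
move: hc; rewrite /crs !lvecE !dvecE.
apply: contra => /eqP h0; apply/eqP; nra.
Qed.

Lemma indep_exists : v != 0 ->
  (exists i j : option 'I_Q,
      row_free (col_mx (lv_family x v o i)^T (lv_family x v o j)^T)) ->
  exists q0, crs (lvec x o q0) v != 0.
Proof.
move=> hv [[i|] [[j|] h]]; move: (rowfree_cross _ _ h) => /=.
- move=> hij.
  case: (eqVneq (crs (lvec x o i) v) 0) => hi; last by exists i.
  case: (eqVneq (crs (lvec x o j) v) 0) => hj; last by exists j.
  exfalso; move: hij hi hj; rewrite /crs.
  set a0 := lvec x o i 0 0; set a1 := lvec x o i 1 0.
  set b0 := lvec x o j 0 0; set b1 := lvec x o j 1 0.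
  move=> hij hi hj.
  have hn := nz_norm _ hv.
  have e0 : (a0 * b1 - a1 * b0) * v 0 0 = 0.
    transitivity (a0 * (- (b0 * v 1 0 - b1 * v 0 0)) + b0 * (a0 * v 1 0 - a1 * v 0 0)); first ring.
    by rewrite hi hj; ring.
  have e1 : (a0 * b1 - a1 * b0) * v 1 0 = 0.
    transitivity (a1 * (- (b0 * v 1 0 - b1 * v 0 0)) + b1 * (a0 * v 1 0 - a1 * v 0 0)); first ring.
    by rewrite hi hj; ring.
  move: e0 e1 => /eqP; rewrite mulf_eq0 (negbTE hij) /= => /eqP e0.
  move=> /eqP; rewrite mulf_eq0 (negbTE hij) /= => /eqP e1.
  by move: hn; rewrite e0 e1 expr2 mulr0 addr0 ltxx.
- by move=> h1; exists i.
- move=> h1; exists j; move: h1; rewrite /crs; apply: contra => /eqP h0.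
  apply/eqP; nra.
- by rewrite /crs mulrC subrr eqxx.
Qed.

End Main.


Section Main2.
Context {R : realType} {Q : nat} (x v : 'cV[R]_2) (o : 'I_Q -> 'cV[R]_2).

Lemma trinv_CA (c : R) T : 0 < c -> trinv (c *: A_T x v o T) =
  if 0 < dt (A_T x v o T) then (trr (A_T x v o T) / dt (A_T x v o T) / c)%:E else (+oo)%E.
Proof.
move=> hc; rewrite trinv_psd; last by apply: psd2_scale; [exact: ltW|exact: A_psd].
have hc2 : 0 < c ^+ 2 by rewrite exprn_gt0.
rewrite dt_scale pmulr_rgt0 //; case: ifP => // hd.
rewrite trr_scale; congr (_%:E); field.
by rewrite lt0r_neq0 // lt0r_neq0.
Qed.

Lemma strict_dec (c : R) T q0 : 0 < c -> crs (lvec x o q0) v != 0 ->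
  (forall t q, (0 < t)%N -> dvec x v o t q != 0) -> (0 < T)%N ->
  (trinv (c *: A_T x v o T.+1) < trinv (c *: A_T x v o T))%E.
Proof.
move=> hc hcr hnz hT.
have hpos : 0 < dt (A_T x v o T.+1).
  have -> : T.+1 = (2 + T.-1)%N by case: T hT.
  exact: lt_le_trans (A2_pos x v o q0 hcr hnz) (A_dt_mono x v o 2 T.-1).
rewrite !trinv_CA // hpos.
case: ifP => hA; last exact: ltey.
rewrite lte_fin ltr_pM2r ?invr_gt0 //.
have [_ _ h] := mono22 (A_psd x v o T) (G_psd x v o T.+1) hA.
rewrite -A_S in h; apply: h.
rewrite trr_sum (bigD1 q0) //=.
have h1 : 0 < trr (proj_term (dvec x v o T.+1 q0)).
  by rewrite trr_proj ?hnz // invr_gt0 nz_norm ?hnz.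
have h2 : 0 <= \sum_(i < Q | i != q0) trr (proj_term (dvec x v o T.+1 i)).
  apply: sumr_ge0 => i _; case: (psd_proj (dvec x v o T.+1 i)) => _ a c0 _.
  by rewrite /trr addr_ge0.
lra.
Qed.

Lemma inv_sq_sum T : \sum_(1 <= t < T.+2) (t%:R ^+ 2 : R)^-1 <= 2 - (T.+1%:R)^-1.
Proof.
elim: T => [|T IH].
  rewrite big_ltn // big_geq // addr0 expr1n invr1; lra.
rewrite big_nat_recr //=.
set n : R := T.+1%:R.
have hn : 0 < n by rewrite ltr0n.
have -> : (T.+2%:R : R) = n + 1 by rewrite /n -natr1.
have h : ((n + 1) ^+ 2)^-1 <= n^-1 - (n + 1)^-1.
  rewrite (_ : n^-1 - (n + 1)^-1 = (n * (n + 1))^-1); last first.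
    by field; rewrite lt0r_neq0 //; lra.
  rewrite lef_pV2 ?posrE ?exprn_gt0 ?mulr_gt0 //; try lra.
rewrite -/n in IH; clearbody n; lra.
Qed.

Lemma inv_sq_sum2 T : \sum_(1 <= t < T.+1) (t%:R ^+ 2 : R)^-1 <= 2.
Proof.
case: T => [|T]; first by rewrite big_geq //; lra.
apply: le_trans (inv_sq_sum T) _.
rewrite lerBlDr lerDl invr_ge0; exact: ler0n.
Qed.

End Main2.


Section Main3.
Context {R : realType} {Q : nat} (x v : 'cV[R]_2) (o : 'I_Q -> 'cV[R]_2).
Context (G1 : R) (Nt : nat) (sigma2 : R) (phi : nat -> 'I_Q -> R) (dmin : R).

Let d t q := dvec x v o t q.
Let K := G1 * Nt%:R * (Nt%:R ^+ 2 - 1).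
Definition cf t q := (sigma_theta2 G1 Nt sigma2 x v o phi t q * vnorm (dvec x v o t q) ^+ 4)^-1.

Lemma FisherE T : FisherX G1 Nt sigma2 x v o phi T =
  \sum_(1 <= t < T.+1) \sum_(q < Q) cf t q *: Xm (dvec x v o t q).
Proof. by []. Qed.

Lemma CAE (c : R) T : c *: A_T x v o T =
  \sum_(1 <= t < T.+1) \sum_(q < Q) (c / vnorm (dvec x v o t q) ^+ 4) *: Xm (dvec x v o t q).
Proof.
rewrite /A_T scaler_sumr exchange_big /=; apply: eq_bigr => t _.
rewrite scaler_sumr; apply: eq_bigr => q _; by rewrite /proj_term scalerA.
Qed.

Lemma cfE t q : cf t q = K * cos (phi t q) ^+ 2 / (vnorm (dvec x v o t q) ^+ 2 * sigma2)
   / vnorm (dvec x v o t q) ^+ 4.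
Proof. by rewrite /cf /sigma_theta2 invfM invf_div. Qed.

Lemma K_pos : 0 < G1 -> (1 < Nt)%N -> 0 < K.
Proof.
move=> hG hN; rewrite /K; have h : 1 < (Nt%:R : R) by rewrite ltr1n.
apply: mulr_gt0; first by apply: mulr_gt0 => //; lra.
nra.
Qed.

Lemma cf_bounds t q : 0 < G1 -> (1 < Nt)%N -> 0 < sigma2 -> 0 < dmin ->
  dmin <= vnorm (dvec x v o t q) ->
  0 <= cf t q /\ cf t q <= C0 G1 Nt sigma2 dmin / vnorm (dvec x v o t q) ^+ 4.
Proof.
move=> hG hN hs hd hv.
have hK := K_pos hG hN.
set n := vnorm (dvec x v o t q).
have hn : 0 < n by apply: lt_le_trans hd hv.
have hc2 : cos (phi t q) ^+ 2 <= 1.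
  have := cos2Dsin2 (phi t q); have := sqr_ge0 (sin (phi t q)); lra.
have hc0 : 0 <= cos (phi t q) ^+ 2 by apply: sqr_ge0.
have hn4 : 0 < (n ^+ 4)^-1 by rewrite invr_gt0 exprn_gt0.
rewrite cfE -/n /C0 -/K; split.
  apply: mulr_ge0; last exact: ltW.
  apply: mulr_ge0; first by apply: mulr_ge0 => //; exact: ltW.
  by rewrite invr_ge0; apply: mulr_ge0 => //; [apply: sqr_ge0|exact: ltW].
apply: ler_wpM2r; first exact: ltW.
have hs2 : 0 < n ^+ 2 * sigma2 by rewrite mulr_gt0 ?exprn_gt0.
apply: (@le_trans _ _ (K / (n ^+ 2 * sigma2))).
  rewrite mulrAC; rewrite -[X in _ <= X]mulr1; apply: ler_wpM2l => //.
  by apply: mulr_ge0; [exact: ltW|rewrite invr_ge0 ltW].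
apply: ler_wpM2l; first exact: ltW.
rewrite lef_pV2 ?posrE ?mulr_gt0 ?exprn_gt0 //.
have h2 : dmin * dmin <= n * n by apply: ler_pM => //; exact: ltW.
rewrite mulrC !expr2; apply: ler_wpM2r => //; exact: ltW.
Qed.


Lemma part1 T : 0 < G1 -> (1 < Nt)%N -> 0 < sigma2 -> 0 < dmin ->
  (forall t q, (0 < t)%N -> dmin <= vnorm (dvec x v o t q)) ->
  (Delta_bar G1 Nt sigma2 dmin x v o T <= CRLB G1 Nt sigma2 x v o phi T)%E.
Proof.
move=> hG hN hs hd hmin.
rewrite /Delta_bar /CRLB FisherE.
set F := \sum_(1 <= t < T.+1) \sum_(q < Q) cf t q *: Xm _.
set c := C0 G1 Nt sigma2 dmin.
set Gm := \sum_(1 <= t < T.+1) \sum_(q < Q)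
   (c / vnorm (dvec x v o t q) ^+ 4 - cf t q) *: Xm (dvec x v o t q).
have hM : c *: A_T x v o T = F + Gm.
  rewrite CAE /F /Gm -big_split; apply: eq_bigr => t _; rewrite -big_split.
  apply: eq_bigr => q _.
  transitivity (cf t q *: Xm (dvec x v o t q) + (c / vnorm (dvec x v o t q) ^+ 4 - cf t q) *: Xm (dvec x v o t q)); last by [].
  by rewrite -scalerDl addrC subrK.
have hF : psd2 F.
  apply: psd2_sum_nat => t /andP[ht _]; apply: psd2_sum => q _.
  apply: psd2_scale; last exact: psd_Xm.
  exact: (@cf_bounds t q hG hN hs hd (hmin t q ht)).1.
have hGm : psd2 Gm.
  apply: psd2_sum_nat => t /andP[ht _]; apply: psd2_sum => q _.
  apply: psd2_scale; last exact: psd_Xm.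
  by rewrite subr_ge0; exact: (@cf_bounds t q hG hN hs hd (hmin t q ht)).2.
rewrite hM (trinv_psd hF) (trinv_psd (psd2_add hF hGm).1).
case hFd: (0 < dt F); last exact: leey.
have [h1 h2 _] := mono22 hF hGm hFd.
by rewrite h1 lee_fin.
Qed.

Lemma part2 T :
  (forall t q, (0 < t <= T)%N -> vnorm (dvec x v o t q) = dmin /\ phi t q = 0) ->
  CRLB G1 Nt sigma2 x v o phi T = Delta_bar G1 Nt sigma2 dmin x v o T.
Proof.
move=> H; rewrite /Delta_bar /CRLB FisherE CAE; congr trinv.
apply: eq_big_nat => t ht; apply: eq_bigr => q _.
have [h1 h2] := H t q ht.
congr (_ *: _); rewrite cfE h1 h2 cos0 expr1n mulr1 /C0 -/K.
by rewrite [_ * sigma2]mulrC.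
Qed.

End Main3.


Section Main4.
Context {R : realType} {Q : nat} (x v : 'cV[R]_2) (o : 'I_Q -> 'cV[R]_2) (dmin : R).

Definition Kq (q : 'I_Q) : R :=
  (2 + 2 * (lvec x o q 0 0 ^+ 2 + lvec x o q 1 0 ^+ 2) / dmin ^+ 2) / (v 0 0 ^+ 2 + v 1 0 ^+ 2).

Lemma term_bound t q : (0 < t)%N -> v != 0 -> 0 < dmin ->
  dvec x v o t q != 0 -> dmin <= vnorm (dvec x v o t q) ->
  trr (proj_term (dvec x v o t q)) <= Kq q / (t%:R ^+ 2).
Proof.
move=> ht hv hd hnz hmin.
rewrite trr_proj // /Kq.
have hN : dmin ^+ 2 <= dvec x v o t q 0 0 ^+ 2 + dvec x v o t q 1 0 ^+ 2.
  rewrite -vnorm2 !expr2; apply: ler_pM => //; exact: ltW.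
have hcv := nz_norm _ hv.
have htt : 0 < (t%:R : R) ^+ 2 by rewrite exprn_gt0 // ltr0n.
have hN0 : 0 < dvec x v o t q 0 0 ^+ 2 + dvec x v o t q 1 0 ^+ 2.
  by apply: lt_le_trans hN; rewrite exprn_gt0.
move: hN hN0; rewrite !dvecE !lvecE.
set l0 := x 0 0 - o q 0 0; set l1 := x 1 0 - o q 1 0.
set tt : R := t%:R; set v0 := v 0 0; set v1 := v 1 0.
set N := (l0 + tt * v0) ^+ 2 + (l1 + tt * v1) ^+ 2.
move=> hN hN0.
have hdm : 0 < dmin ^+ 2 by rewrite exprn_gt0.
set a := l0 ^+ 2 + l1 ^+ 2.
set w := a / dmin ^+ 2.
have hw : w * dmin ^+ 2 = a by rewrite /w mulfVK // lt0r_neq0.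
have hw0 : 0 <= w by rewrite /w divr_ge0 // ?/a ?addr_ge0 ?sqr_ge0 // ltW.
have key : tt ^+ 2 * (v0 ^+ 2 + v1 ^+ 2) <= (2 + 2 * w) * N.
  have h1 := sqr_ge0 (2 * l0 + tt * v0).
  have h2 := sqr_ge0 (2 * l1 + tt * v1).
  have h3 : w * dmin ^+ 2 <= w * N by apply: ler_wpM2l.
  have eN : N = (l0 + tt * v0) ^+ 2 + (l1 + tt * v1) ^+ 2 by [].
  have ea : a = l0 ^+ 2 + l1 ^+ 2 by [].
  clearbody w N a. nra.
have e2 : 2 * a / dmin ^+ 2 = 2 * w by rewrite /w mulrA.
rewrite e2.
have hcv' : 0 < v0 ^+ 2 + v1 ^+ 2 := hcv.
have htt' : 0 < tt ^+ 2 := htt.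
rewrite ler_pdivlMr // ler_pdivlMr //.
rewrite (_ : N^-1 * tt ^+ 2 * (v0 ^+ 2 + v1 ^+ 2) = (tt ^+ 2 * (v0 ^+ 2 + v1 ^+ 2)) / N); last first.
  ring.
by rewrite ler_pdivrMr.
Qed.



Lemma Kq_ge0 q : v != 0 -> 0 < dmin -> 0 <= Kq q.
Proof.
move=> hv hd; rewrite /Kq; apply: divr_ge0; last exact: ltW (nz_norm _ hv).
apply: addr_ge0 => //; apply: divr_ge0; last by rewrite sqr_ge0.
by apply: mulr_ge0 => //; rewrite addr_ge0 ?sqr_ge0.
Qed.

Lemma trA_bound T : v != 0 -> 0 < dmin ->
  (forall t q, (0 < t)%N -> dvec x v o t q != 0) ->
  (forall t q, (0 < t)%N -> dmin <= vnorm (dvec x v o t q)) ->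
  trr (A_T x v o T) <= \sum_(q < Q) Kq q * 2.
Proof.
move=> hv hd hnz hmin.
rewrite /A_T trr_sum; apply: ler_sum => q _; rewrite trr_sum.
apply: (@le_trans _ _ (\sum_(1 <= t < T.+1) Kq q / (t%:R ^+ 2))).
  apply: ler_sum_nat => t /andP[ht _]; apply: term_bound => //; [exact: hnz|exact: hmin].
rewrite -mulr_sumr; apply: ler_wpM2l; first exact: Kq_ge0.
exact: inv_sq_sum2.
Qed.
End Main4.


Unset Implicit Arguments.

Theorem proposition1 (R : realType) (Q Nt : nat) (G1 sigma2 : R)
  (o : 'I_Q -> 'cV[R]_2) (x v : 'cV[R]_2) (phi : nat -> 'I_Q -> R) (dmin : R) :
  0 < G1 -> 0 < sigma2 -> (1 < Nt)%N -> v != 0 ->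
  (forall (t : nat) (q : 'I_Q), (0 < t)%N -> dvec x v o t q != 0) ->
  (forall (t : nat) (q : 'I_Q), (0 < t)%N -> dmin <= vnorm (dvec x v o t q)) ->
  (exists (t : nat) (q : 'I_Q), (0 < t)%N /\ vnorm (dvec x v o t q) = dmin) ->
  0 < dmin ->
  (forall T : nat,
     (Delta_bar G1 Nt sigma2 dmin x v o T <= CRLB G1 Nt sigma2 x v o phi T)%E) /\
  (forall T : nat,
     (forall (t : nat) (q : 'I_Q), (0 < t <= T)%N ->
        vnorm (dvec x v o t q) = dmin /\ phi t q = 0) ->
     CRLB G1 Nt sigma2 x v o phi T = Delta_bar G1 Nt sigma2 dmin x v o T) /\
  ((exists i j : option 'I_Q,
      row_free (col_mx (lv_family x v o i)^T (lv_family x v o j)^T)) ->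
   (forall T : nat, (0 < T)%N ->
      (Delta_bar G1 Nt sigma2 dmin x v o T.+1 < Delta_bar G1 Nt sigma2 dmin x v o T)%E) /\
   (exists L : R, 0 < L /\
      (fun T : nat => Delta_bar G1 Nt sigma2 dmin x v o T) @ \oo --> (L%:E)%E)).
Proof.
move=> hG hs hN hv hnz hmin _ hd.
set c := C0 G1 Nt sigma2 dmin.
have hc : 0 < c.
  rewrite /c /C0; apply: divr_gt0; first exact: (K_pos G1 Nt hG hN).
  by apply: mulr_gt0 => //; rewrite exprn_gt0.
split; first by move=> T; apply: part1.
split; first by move=> T H; apply: part2.
move=> hind.
have [q0 hq0] := indep_exists x v o hv hind.
have hdec : forall T, (0 < T)%N ->
    (Delta_bar G1 Nt sigma2 dmin x v o T.+1 < Delta_bar G1 Nt sigma2 dmin x v o T)%E.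
  by move=> T hT; apply: (strict_dec x v o c T q0).
split => //.
set u := fun T => Delta_bar G1 Nt sigma2 dmin x v o T.
have hA0 : A_T x v o 0 = 0 by rewrite /A_T big1 // => q _; rewrite big_geq.
have hni : nonincreasing_seq u.
  apply/nonincreasing_seqP => -[|n].
    have hd0 : dt (A_T x v o 0) = 0.
      by rewrite {1}hA0 -{1}(scale0r (A_T x v o 0)) dt_scale expr0n mul0r.
    rewrite /u /Delta_bar [X in (_ <= X)%E]trinv_CA // hd0 ltxx; exact: leey.
  exact: ltW (hdec n.+1 isT).
have hcv := ereal_nonincreasing_cvgn hni.
set Bnd := \sum_(q < Q) Kq x v o dmin q * 2.
have hA2 := A2_pos x v o q0 hq0 hnz.
have trpos : forall T, 0 < dt (A_T x v o T) -> 0 < trr (A_T x v o T).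
  move=> T; case: (A_psd x v o T) => _ a0 c0 h; rewrite /dt /trr => hh; nra.
have hB : 0 < Bnd.
  exact: lt_le_trans (trpos 2%N hA2) (trA_bound x v o dmin 2 hv hd hnz hmin).
set Lb := 4 / Bnd / c.
have hLb : 0 < Lb by rewrite /Lb; apply: divr_gt0 => //; apply: divr_gt0.
have hlb : forall T, (Lb%:E <= u T)%E.
  move=> T; rewrite /u /Delta_bar trinv_CA //; case: ifP => h; last exact: leey.
  rewrite lee_fin /Lb ler_pM2r ?invr_gt0 //.
  apply: le_trans (trdt_lb (A_psd x v o T) h).
  apply: ler_wpM2l => //.
  rewrite lef_pV2 ?posrE ?trpos //.
  exact: trA_bound.
have hu2 : exists r, u 2%N = r%:E.
  by rewrite /u /Delta_bar trinv_CA // hA2; eexists.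
have hm1 : (Lb%:E <= ereal_inf (u @` setT))%E.
  by apply: le_ereal_inf_tmp => y [T _ <-]; exact: hlb.
have hm2 : (ereal_inf (u @` setT) <= u 2%N)%E.
  by apply: ereal_inf_lbound; exists 2%N.
move: hcv hm1 hm2; case: (ereal_inf (u @` setT)) => [r| |] hcv h1 h2.
- exists r; split => //; apply: lt_le_trans hLb _; by rewrite -lee_fin.
- by case: hu2 h2 => r ->.
- by [].
Qed.
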